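(* Let $X\in\mathbb{R}^{m\times m}$, $Y\in\mathbb{R}^{n\times n}$, and define $L:\mathbb{R}^{m\times n}\to\mathbb{R}^{m\times n}$ by $L(A)=XAY$. Then $L$ maps every semipositive $m\times n$ matrix to a semipositive matrix if and only if either $X$ is row positive and $Y$ is inverse nonnegative, or $-X$ is row positive and $-Y$ is inverse nonnegative.
   Context: For a matrix or vector, $\geq 0$ means entrywise nonnegative and $>0$ entrywise positive. A matrix $A\in\mathbb{R}^{m\times n}$ is semipositive if there exists $x\in\mathbb{R}^n$ with $x\geq 0$ and $Ax>0$. A square matrix $X$ is row positive if $X\geq 0$ and every row of $X$ contains a nonzero entry. A square matrix $Y$ is inverse nonnegative if $Y$ is invertible and $Y^{-1}\geq 0$. *)

(* Defs.v *)
From HB Require Import structures.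
From mathcomp Require Import all_boot all_order all_algebra.
Set Implicit Arguments. Unset Strict Implicit. Unset Printing Implicit Defensive.
Import Order.TTheory GRing.Theory Num.Theory.
Local Open Scope ring_scope.

Definition semipositive (R : realFieldType) (m n : nat) (A : 'M[R]_(m, n)) : Prop :=
  exists x : 'cV[R]_n, (forall j, 0 <= x j 0) /\ (forall i, 0 < (A *m x) i 0).

Definition row_positive (R : realFieldType) (m : nat) (X : 'M[R]_m) : Prop :=
  (forall i j, 0 <= X i j) /\ (forall i, exists j, X i j != 0).

Definition inverse_nonnegative (R : realFieldType) (n : nat) (Y : 'M[R]_n) : Prop :=
  Y \in unitmx /\ (forall i j, 0 <= invmx Y i j).

(* Main.v *)
Require Import Defs.
From HB Require Import structures.
From mathcomp Require Import all_boot all_order all_algebra.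
From mathcomp Require Import ring lra.
Import Order.TTheory GRing.Theory Num.Theory.
Local Open Scope ring_scope.

Lemma d0 (R : realFieldType) n (j0 : 'I_n) : 0 < (delta_mx 0 j0 : 'rV[R]_n) 0 j0.
Proof. by rewrite mxE !eqxx. Qed.

Section S.
Variables (R : realFieldType) (m n : nat).

Definition Hyp (X : 'M[R]_m) (Y : 'M[R]_n) :=
  forall A : 'M[R]_(m, n), semipositive A -> semipositive (X *m A *m Y).

Lemma HypN X Y : Hyp X Y -> Hyp (- X) (- Y).
Proof.
move=> H A /H; by rewrite mulNmx mulmxN mulNmx opprK.
Qed.

Lemma key X Y (u : 'cV[R]_m) (a : 'rV[R]_n) j : Hyp X Y ->
  (forall i, 0 < u i 0) -> 0 < a 0 j ->
  exists z : 'cV[R]_n, (forall k, 0 <= z k 0) /\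
    forall i, 0 < (X *m u) i 0 * (a *m Y *m z) 0 0.
Proof.
move=> H Hu Ha.
have [|z [z0 Hz]] := H (u *m a).
  exists (delta_mx j 0); split.
    by move=> k; rewrite mxE; case: (_ && _).
  move=> i; rewrite -mulmxA -colE !mxE big_ord1 !mxE; exact: mulr_gt0.
exists z; split => // i.
have E : X *m (u *m a) *m Y *m z = (X *m u) *m (a *m Y *m z) by rewrite !mulmxA.
by have := Hz i; rewrite E mxE big_ord1.
Qed.

Arguments key {X Y u a j}.

Lemma sum_pos (X : 'M[R]_m) (w : 'cV[R]_m) i :
  (forall j, 0 <= X i j) -> (exists j, X i j != 0) -> (forall j, 0 < w j 0) ->
  0 < (X *m w) i 0.
Proof.
move=> X0 [j Xj] w0; rewrite mxE (bigD1 j) //=.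
have h1 : 0 < X i j * w j 0 by apply: mulr_gt0 => //; rewrite lt_def Xj X0.
have h2 : 0 <= \sum_(k | k != j) X i k * w k 0.
  by apply: sumr_ge0 => k _; apply: mulr_ge0 => //; apply: ltW.
lra.
Qed.

Lemma suff_pos X Y : row_positive X -> inverse_nonnegative Y -> Hyp X Y.
Proof.
move=> [X0 Xr] [Yu Y0] A [x [x0 Ax]].
exists (invmx Y *m x); split.
  move=> k; rewrite mxE; apply: sumr_ge0 => l _; exact: mulr_ge0.
move=> i; rewrite -!mulmxA (mulmxA Y) (mulmxV Yu) mul1mx.
exact: sum_pos.
Qed.

Lemma pos_case X Y (i0 : 'I_m) (j0 : 'I_n) : Hyp X Y ->
  0 < (X *m (const_mx 1 : 'cV[R]_m)) i0 0 -> row_positive X /\ inverse_nonnegative Y.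
Proof.
move=> H Hi0.
have one_pos : forall i : 'I_m, 0 < (const_mx 1 : 'cV[R]_m) i 0.
  by move=> i; rewrite mxE.
have allpos : forall i, 0 < (X *m (const_mx 1 : 'cV[R]_m)) i 0.
  have [z [_ Hz]] := key H one_pos
     (d0 R n j0).
  have := Hz i0; rewrite (pmulr_rgt0 _ Hi0) => hs i.
  by have := Hz i; rewrite (pmulr_lgt0 _ hs).
have X0 : forall i j, 0 <= X i j.
  move=> i j; rewrite leNgt; apply/negP => Xn.
  pose s := (X *m (const_mx 1 : 'cV[R]_m)) i 0 / (- X i j).
  have s0 : 0 < s by apply: divr_gt0 => //; rewrite oppr_gt0.
  pose u : 'cV[R]_m := const_mx 1 + s *: delta_mx j 0.
  have u0 : forall k, 0 < u k 0.
    move=> k; rewrite !mxE; case: (_ && _) => /=; rewrite ?mulr1 ?mulr0; lra.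
  have [z [_ Hz]] := key H u0
     (d0 R n j0).
  have := Hz i.
  have -> : (X *m u) i 0 = 0.
    rewrite mulmxDr -scalemxAr -colE mxE [X in _ + X]mxE [X in _ + _ * X]mxE.
    rewrite /s.
    have hX : X i j != 0 by exact: ltr0_neq0.
    rewrite mulrC; field; rewrite ?oppr_eq0 //.
  by rewrite mul0r ltxx.
have rowp : row_positive X.
  split => // i; case: (boolP [exists j, X i j != 0]) => [/existsP //|/existsPn hn].
  have := allpos i; rewrite mxE big1 ?ltxx // => j _.
  by have := hn j; rewrite negbK => /eqP ->; rewrite mul0r.
split => //.
have mono : forall b : 'rV[R]_n, (forall k, 0 <= (b *m Y) 0 k) -> forall k, 0 <= b 0 k.
  move=> b hb k; rewrite leNgt; apply/negP => bk.
  have bk' : 0 < (- b) 0 k by rewrite mxE oppr_gt0.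
  have [z [z0 Hz]] := key H one_pos bk'.
  have := Hz i0; rewrite (pmulr_rgt0 _ Hi0) mulNmx mulNmx mxE oppr_gt0 ltNge.
  move/negP; apply; rewrite mxE; apply: sumr_ge0 => l _; exact: mulr_ge0.
have Yu : Y \in unitmx.
  rewrite unitmxE unitfE; apply/negP => /det0P [v vn vY].
  move/negP: vn; apply; apply/eqP/matrixP => i k; rewrite mxE.
  have h1 : 0 <= v i k.
    rewrite (ord1 i); apply: mono => l; by rewrite vY mxE.
  have h2 : 0 <= (- v) i k.
    rewrite (ord1 i); apply: mono => l; by rewrite mulNmx vY oppr0 mxE.
  move: h2; rewrite mxE; lra.
split => // i j.
have -> : invmx Y i j = ((delta_mx 0 i : 'rV[R]_n) *m invmx Y) 0 j by rewrite -rowE mxE.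
apply: mono => k; rewrite -mulmxA mulVmx // mulmx1 mxE; by case: (_ && _).
Qed.

End S.
Arguments key {R m n X Y u a j}.
Arguments pos_case {R m n X Y i0} j0.
Arguments HypN {R m n X Y}.
Arguments suff_pos {R m n X Y}.

Theorem mainTheorem8 (R : realFieldType) (m n : nat)
  (Hm : (0 < m)%N) (Hn : (0 < n)%N) (X : 'M[R]_m) (Y : 'M[R]_n) :
  (forall A : 'M[R]_(m, n), semipositive A -> semipositive (X *m A *m Y)) <->
  ((row_positive X /\ inverse_nonnegative Y) \/
   (row_positive (- X) /\ inverse_nonnegative (- Y))).
Proof.
split.
  move=> H; pose i0 := Ordinal Hm; pose j0 := Ordinal Hn.
  have one_pos : forall i : 'I_m, 0 < (const_mx 1 : 'cV[R]_m) i 0.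
    by move=> i; rewrite mxE.
  have [z [_ Hz]] := key H one_pos
     (d0 R n j0).
  have hz := Hz i0.
  have [hx|hx|hx] := ltrgtP 0 ((X *m (const_mx 1 : 'cV[R]_m)) i0 0).
  - by left; exact: (pos_case j0 H hx).
  - right.
    have hx' : 0 < ((- X) *m (const_mx 1 : 'cV[R]_m)) i0 0.
      by rewrite mulNmx mxE oppr_gt0.
    exact: (pos_case j0 (HypN H) hx').
  - by move: hz; rewrite -hx mul0r ltxx.
case=> [[hX hY]|[hX hY]] A hA.
  exact: suff_pos hX hY A hA.
have := suff_pos hX hY A hA; by rewrite mulNmx mulmxN mulNmx opprK.
Qed.
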